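(* Let $f:\mathbb{R}^n\to\mathbb{R}$ be bounded, $\lambda>0$, $h>0$. On the grid $h\mathbb{Z}^n$ define $f_0(x_k)=f(x_k)$ and, for $i\ge1$, $$f_i(x_k)=\min\{f_{i-1}(x_k+rh)+\lambda h^2|r|^2\tau_i:\ r\in\mathbb{Z}^n,\ |r|_\infty\le1\},\qquad \tau_i=2i-1.$$ Then for every grid point $x_k\in h\mathbb{Z}^n$ and every $m=0,1,2,\dots$, $$f_m(x_k)=g_m(x_k):=\inf\{f(x_k+rh)+\lambda h^2|r|^2:\ r\in\mathbb{Z}^n,\ |r|_\infty\le m\}.$$
   Context: $|r|$ is the Euclidean norm and $|r|_\infty=\max_i|r_i|$ the maximum norm of $r\in\mathbb{Z}^n$. *)

(* Defs.v *)
From HB Require Import structures.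
From mathcomp Require Import all_boot all_order all_algebra.
From mathcomp Require Import classical_sets reals.
Set Implicit Arguments. Unset Strict Implicit. Unset Printing Implicit Defensive.
Import Order.TTheory GRing.Theory Num.Theory.
Local Open Scope ring_scope.
Local Open Scope classical_set_scope.

Definition sqnorm (n : nat) (r : 'rV[int]_n) : int := \sum_(i < n) (r 0 i) ^+ 2.

Definition box (n : nat) (m : nat) : set 'rV[int]_n :=
  [set r | forall i : 'I_n, `|r 0 i| <= m%:Z].

Arguments box : clear implicits.

Definition gridpt (R : realType) (n : nat) (h : R) (k : 'rV[int]_n) : 'rV[R]_n :=
  h *: map_mx (fun z : int => z%:~R) k.

(* f_i(x_k), indexed by k in Z^n (x_k = h k, x_k + r h = h (k + r)),
   with tau_i = 2 i - 1 *)
Fixpoint fiter (R : realType) (n : nat) (f : 'rV[R]_n -> R) (lam h : R)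
    (i : nat) (k : 'rV[int]_n) : R :=
  match i with
  | 0 => f (gridpt h k)
  | i'.+1 =>
      inf [set fiter f lam h i' (k + r) + lam * h ^+ 2 * (sqnorm r)%:~R
                 * (2 * i'.+1 - 1)%N%:R | r in box n 1%N]
  end.

Definition gfun (R : realType) (n : nat) (f : 'rV[R]_n -> R) (lam h : R)
    (m : nat) (k : 'rV[int]_n) : R :=
  inf [set f (gridpt h (k + r)) + lam * h ^+ 2 * (sqnorm r)%:~R | r in box n m].

(* Main.v *)
Require Import Defs.
From HB Require Import structures.
From mathcomp Require Import all_boot all_order all_algebra.
From mathcomp Require Import classical_sets reals.
From mathcomp Require Import zify ring lra.
Import Order.TTheory GRing.Theory Num.Theory.
Local Open Scope ring_scope.
Local Open Scope classical_set_scope.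

Lemma int_step1 (m : nat) (s r : int) : `|s| <= 1 -> `|r| <= m%:Z ->
  (s + r) ^+ 2 <= r ^+ 2 + s ^+ 2 * (2 * m.+1 - 1)%N%:R.
Proof.
rewrite !ler_norml => /andP[s1 s2] /andP[r1 r2].
have -> : ((2 * m.+1 - 1)%N%:R : int) = 2 * m%:Z + 1 by rewrite natrB // natrM; lia.
have : s = -1 \/ s = 0 \/ s = 1 by lia.
case=> [->|[->|->]]; rewrite ?expr2; nia.
Qed.

Lemma int_step2 (m : nat) (t : int) : `|t| <= m.+1%:Z ->
  let s := (if m%:Z < t then 1 else if t < - m%:Z then -1 else 0) in
  [/\ `|s| <= 1, `|t - s| <= m%:Z &
   (t - s) ^+ 2 + s ^+ 2 * (2 * m.+1 - 1)%N%:R <= t ^+ 2].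
Proof.
rewrite ler_norml => /andP[t1 t2] s.
have -> : ((2 * m.+1 - 1)%N%:R : int) = 2 * m%:Z + 1 by rewrite natrB // natrM; lia.
rewrite /s !ler_norml; case: ifP => H1; last case: ifP => H2; rewrite ?expr2.
- have -> : t = m.+1%:Z by lia. split; lia.
- have -> : t = - m.+1%:Z by lia. split; lia.
- split; lia.
Qed.

Lemma sq_ge0 n (r : 'rV[int]_n) : 0 <= sqnorm r.
Proof. by apply: sumr_ge0 => i _; rewrite sqr_ge0. Qed.

Lemma box0 n m : box n m 0.
Proof. by move=> i; rewrite mxE normr0. Qed.

Lemma sq_step1 n m (s r : 'rV[int]_n) : box n 1 s -> box n m r ->
  sqnorm (s + r) <= sqnorm r + sqnorm s * (2 * m.+1 - 1)%N%:R.
Proof.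
move=> Hs Hr; rewrite /sqnorm mulr_suml -big_split /=.
apply: ler_sum => i _; rewrite mxE; exact: int_step1.
Qed.

Lemma sq_step2 n m (t : 'rV[int]_n) : box n m.+1 t ->
  exists s r, [/\ box n 1 s, box n m r, t = s + r &
    sqnorm r + sqnorm s * (2 * m.+1 - 1)%N%:R <= sqnorm t].
Proof.
move=> Ht.
pose s := \row_i (if m%:Z < t 0 i then 1 else if t 0 i < - m%:Z then -1 else 0 : int).
exists s, (t - s); split.
- move=> i; rewrite mxE; case: (@int_step2 m _ (Ht i)) => //.
- move=> i; rewrite !mxE; case: (@int_step2 m _ (Ht i)) => //.
- by rewrite addrC subrK.
- rewrite /sqnorm mulr_suml -big_split /=.
  apply: ler_sum => i _; rewrite !mxE; case: (@int_step2 m _ (Ht i)) => //.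
Qed.

Theorem theorem4p7 (R : realType) (n : nat) (f : 'rV[R]_n -> R)
    (lam h : R) :
  (exists M : R, forall x, `|f x| <= M) -> 0 < lam -> 0 < h ->
  forall (k : 'rV[int]_n) (m : nat), fiter f lam h m k = gfun f lam h m k.
Proof.
move=> [M HM] lam0 h0.
set c := lam * h ^+ 2.
have c0 : 0 <= c by rewrite /c mulr_ge0 ?sqr_ge0 // ltW.
have fM x : - M <= f x by have := HM x; rewrite ler_norml => /andP[].
have val_ge k r : - M <= f (gridpt h (k + r)) + c * (sqnorm r)%:~R.
  by rewrite -[- M]addr0 lerD // mulr_ge0 // ler0z sq_ge0.
have Glb m k : lbound [set f (gridpt h (k + r)) + c * (sqnorm r)%:~R | r in box n m] (- M).
  by move=> y [r _ <-].
have Ghas m k : has_lbound [set f (gridpt h (k + r)) + c * (sqnorm r)%:~R | r in box n m].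
  by exists (- M).
have Gne m k : [set f (gridpt h (k + r)) + c * (sqnorm r)%:~R | r in box n m] !=set0.
  by exists (f (gridpt h (k + 0)) + c * (sqnorm (0 : 'rV[int]_n))%:~R); exists 0 => //; apply: box0.
have Gle m k r : box n m r -> gfun f lam h m k <= f (gridpt h (k + r)) + c * (sqnorm r)%:~R.
  by move=> Hr; apply: (ge_inf (Ghas m k)); exists r.
have GM m k : - M <= gfun f lam h m k by apply: lb_le_inf.
move=> k m; elim: m k => [|m IH] k.
  apply/le_anti/andP; split.
    apply: lb_le_inf => // y [r Hr <-].
    have -> : r = 0.
      apply/matrixP => i j; rewrite (ord1 i) mxE; apply/eqP.
      by rewrite -normr_le0; apply: Hr.
    by rewrite /sqnorm addr0 big1 ?mulr0 ?addr0 // => i _; rewrite mxE expr0n.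
  have := Gle 0%N k 0 (box0 _ _).
  by rewrite /sqnorm addr0 big1 ?mulr0 ?addr0 // => i _; rewrite mxE expr0n.
rewrite /=.
set F := [set _ | r in box n 1].
have Fhas : has_lbound F.
  exists (- M) => y [s _ <-]; rewrite -[- M]addr0 lerD ?IH //.
  by rewrite !mulr_ge0 ?sqr_ge0 ?ler0z ?sq_ge0 ?ler0n // ltW.
have Fne : F !=set0.
  by eexists; exists (0 : 'rV[int]_n) => //; apply: box0.
have key s r : box n 1 s -> box n m r ->
  f (gridpt h (k + s + r)) + c * (sqnorm r)%:~R + c * (sqnorm s)%:~R * (2 * m.+1 - 1)%N%:R
  = f (gridpt h (k + (s + r))) + c * (sqnorm r + sqnorm s * (2 * m.+1 - 1)%N%:R)%:~R.
  by move=> _ _; rewrite addrA intrD intrM rmorph_nat; ring.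
apply/le_anti/andP; split.
- apply: lb_le_inf => // y [t Ht <-].
  have [s [r [Hs Hr -> Hle]]] := @sq_step2 n m t Ht.
  apply: le_trans (ge_inf Fhas _) _; first by exists s.
  rewrite /= IH.
  apply: (@le_trans _ _ (f (gridpt h (k + s + r)) + c * (sqnorm r)%:~R + c * (sqnorm s)%:~R * (2 * m.+1 - 1)%N%:R)).
    by rewrite -mulrA lerD2r; apply: Gle.
  by rewrite key // lerD2l ler_wpM2l // ler_int.
- apply: lb_le_inf => // y [s Hs <-].
  rewrite IH -lerBlDr; apply: lb_le_inf => // z [r Hr <-].
  rewrite lerBlDr -mulrA.
  apply: le_trans (Gle _ _ (s + r) _) _.
    move=> i; rewrite mxE.
    move: (Hs i) (Hr i); move: (s 0 i) (r 0 i) => a b; rewrite !ler_norml; lia.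
  by rewrite mulrA (key s r) // lerD2l ler_wpM2l // ler_int sq_step1.
Qed.
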